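(* Let $\mathcal C'\subseteq\{0,1\}^n$ be a neural code, $c\in\{0,1\}^n$, and $CF(J_{\mathcal C'})=\{f_1,\dots,f_r\}$. Let $M=\{f\in CF(J_{\mathcal C'}) : f(c)=0\}$ and $N=CF(J_{\mathcal C'})\setminus M$. Let $L$ be the set of all products $g=f\cdot(x_i-c_i)$ with $f\in N$ and $i\in[n]$ such that (a) the polynomial $x_i-c_i-1$ does not divide $f$, and (b) $g$ is not a multiple (in $\mathbb F_2[x_1,\dots,x_n]$) of any element of $M$. Then $CF(J_{\mathcal C'\cup\{c\}})=M\cup L$.
   Context: All polynomials lie in $\mathbb F_2[x_1,\dots,x_n]$ (so $x_i-c_i$ is $x_i$ if $c_i=0$ and $1-x_i$ if $c_i=1$). A pseudo-monomial is a polynomial $\prod_{i\in\sigma}x_i\prod_{j\in\tau}(1-x_j)$ with $\sigma\cap\tau=\emptyset$. For $v\in\{0,1\}^n$ let $\rho_v=\prod_{v_i=1}x_i\prod_{v_j=0}(1-x_j)$. For a code $\mathcal C\subseteq\{0,1\}^n$, the neural ideal is $J_\mathcal C=\langle\rho_v : v\in\{0,1\}^n\setminus\mathcal C\rangle$. A pseudo-monomial $f\in J_\mathcal C$ is minimal if there is no pseudo-monomial $g\in J_\mathcal C$ of smaller degree with $f=gh$ for some polynomial $h$; the canonical form $CF(J_\mathcal C)$ is the set of all minimal pseudo-monomials in $J_\mathcal C$. *)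

(* Defs.v *)
From HB Require Import structures.
From mathcomp Require Import all_boot all_order all_algebra.
From mathcomp Require Import mpoly.
Set Implicit Arguments. Unset Strict Implicit. Unset Printing Implicit Defensive.
Import GRing.Theory.
Local Open Scope ring_scope.

Notation F2 := 'F_2.
Notation PolyF2 n := {mpoly F2[n]}.

Notation word n := {ffun 'I_n -> bool}.
Notation code n := {set word n}.

Definition bitF (b : bool) : F2 := (b : nat)%:R.

Definition xlin n (i : 'I_n) (b : bool) : PolyF2 n := 'X_i - (bitF b)%:MP.

Definition evalw n (f : PolyF2 n) (v : word n) : F2 := f.@[fun i => bitF (v i)].

(* Total degree (msize p = 1 + total degree for p <> 0). *)
Definition tdeg n (p : PolyF2 n) : nat := (msize p).-1.

Definition pdvd n (g f : PolyF2 n) : Prop := exists h : PolyF2 n, f = g * h.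

Definition pseudo_monomial n (f : PolyF2 n) : Prop :=
  exists sigma tau : {set 'I_n}, [disjoint sigma & tau] /\
    f = (\prod_(i in sigma) 'X_i) * (\prod_(j in tau) (1 - 'X_j)).

Definition rho n (v : word n) : PolyF2 n :=
  (\prod_(i | v i) 'X_i) * (\prod_(j | ~~ v j) (1 - 'X_j)).

Definition in_neural_ideal n (C : code n) (f : PolyF2 n) : Prop :=
  exists h : word n -> PolyF2 n, f = \sum_(v | v \notin C) h v * rho v.

Definition minimal_pm n (C : code n) (f : PolyF2 n) : Prop :=
  [/\ pseudo_monomial f, in_neural_ideal C f &
      ~ exists g : PolyF2 n, [/\ pseudo_monomial g, in_neural_ideal C g,
            (tdeg g < tdeg f)%N & pdvd g f]].

Definition in_CF n (C : code n) (f : PolyF2 n) : Prop := minimal_pm C f.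

(* Main.v *)
Require Import Defs.
From HB Require Import structures.
From mathcomp Require Import all_boot all_order all_algebra.
From mathcomp Require Import mpoly.
From Stdlib Require Import Classical.
From mathcomp Require Import zify.
Set Implicit Arguments. Unset Strict Implicit. Unset Printing Implicit Defensive.
Import GRing.Theory.
Local Open Scope ring_scope.

Lemma F2_11 : (1 + 1 : F2) = 0.
Proof. by apply/eqP. Qed.
Lemma F2_10 : (1 : F2) != 0.
Proof. by []. Qed.
Lemma F2_cases (x : F2) : x = 0 \/ x = 1.
Proof. case: x => [[|[|k]] H] /=. left; exact: val_inj. right; exact: val_inj. done. Qed.
Lemma F2_opp (x : F2) : - x = x.
Proof. by case: (F2_cases x) => ->; apply/eqP. Qed.

Section S.
Variable n : nat.
Implicit Types (s t : {set 'I_n}) (v : word n).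

Definition P s t : PolyF2 n := (\prod_(i in s) 'X_i) * (\prod_(j in t) (1 - 'X_j)).
Definition box s t v : bool := [forall i in s, v i] && [forall j in t, ~~ v j].

Lemma prod01 (A : {set 'I_n}) (b : 'I_n -> bool) :
  \prod_(i in A) (bitF (b i)) = if [forall i in A, b i] then 1 else 0.
Proof.
case: ifP => [/forall_inP H | /negbT /forall_inPn [i iA /negbTE bi]].
  by apply: big1 => i /H ->.
by rewrite (bigD1 i) //= bi mul0r.
Qed.

Lemma evalP s t v : evalw (P s t) v = if box s t v then 1 else 0.
Proof.
rewrite /evalw /P rmorphM !rmorph_prod /=.
under eq_bigr do rewrite mevalXU.
under [X in _ * X]eq_bigr do rewrite mevalB meval1 mevalXU.
have -> : \prod_(j in t) (1 - bitF (v j)) = \prod_(j in t) bitF (~~ v j).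
  by apply: eq_bigr => j _; case: (v j); apply/eqP.
rewrite !prod01 /box; do 2 case: ifP => _ //=; by rewrite ?mulr1 ?mulr0 ?mul0r.
Qed.


Lemma evalM (f g : PolyF2 n) v : evalw (f * g) v = evalw f v * evalw g v.
Proof. by rewrite /evalw rmorphM. Qed.

Lemma P_split s t s' t' : s \subset s' -> t \subset t' ->
  P s' t' = P s t * P (s' :\: s) (t' :\: t).
Proof.
move=> ss tt; rewrite /P (big_setID s) [X in _ * X](big_setID t) /=.
by rewrite (setIidPr ss) (setIidPr tt) mulrACA.
Qed.

Lemma pdvd_P s t s' t' : [disjoint s' & t'] -> pdvd (P s t) (P s' t') ->
  s \subset s' /\ t \subset t'.
Proof.
move=> dis [h E].
have key : forall v, box s' t' v -> box s t v.
  move=> v bv; have := congr1 (fun f => evalw f v) E; rewrite /= evalM !evalP bv.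
  by case: (box s t v) => //; rewrite mul0r => /eqP; rewrite oner_eq0.
split.
  have /key /andP[/forall_inP H _] : box s' t' [ffun i => i \in s'].
    apply/andP; split; apply/forall_inP => i; rewrite ffunE //.
    by move=> it; apply/negP => is'; move: (disjointFr dis is'); rewrite it.
  by apply/subsetP => i /H; rewrite ffunE.
have /key /andP[_ /forall_inP H] : box s' t' [ffun i => i \notin t'].
  apply/andP; split; apply/forall_inP => i; rewrite ffunE ?negbK //.
  by move=> is'; apply/negP => it; move: (disjointFr dis is'); rewrite it.
by apply/subsetP => i /H; rewrite ffunE negbK.
Qed.


Lemma msize2_nz (p : PolyF2 n) : msize p = 2 -> p != 0.
Proof. by move=> H; rewrite -msize_poly_eq0 H. Qed.

Lemma msizeXi (i : 'I_n) : msize ('X_i : PolyF2 n) = 2.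
Proof. by rewrite msizeX mdeg1. Qed.

Lemma msize1X (i : 'I_n) : msize (1 - 'X_i : PolyF2 n) = 2.
Proof.
apply/eqP; rewrite eqn_leq; apply/andP; split.
  apply: leq_trans (msizeD_le _ _) _; by rewrite msizeN msizeXi msize1.
have : U_(i)%MM \in msupp (1 - 'X_i : PolyF2 n).
  rewrite mcoeff_msupp mcoeffB mcoeff1 mcoeffXU eqxx.
  have -> : (U_(i) == 0)%MM = false.
    by apply/negbTE; rewrite -mdeg_eq0 mdeg1.
  by rewrite sub0r oppr_eq0 oner_eq0.
by move/msize_mdeg_lt; rewrite mdeg1.
Qed.

Lemma msize_prod (T : Type) (r : seq T) (F : T -> PolyF2 n) :
  (forall x, msize (F x) = 2) -> msize (\prod_(x <- r) F x) = (size r).+1.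
Proof.
move=> H; elim: r => [|x r IH]; first by rewrite big_nil msize1.
rewrite big_cons msizeM ?H ?IH //; first exact: msize2_nz.
by rewrite -msize_poly_eq0 IH.
Qed.

Lemma tdegP s t : tdeg (P s t) = (#|s| + #|t|)%N.
Proof.
rewrite /tdeg /P -!big_enum /=.
rewrite msizeM ?msize_prod ?cardE //=; try exact: msizeXi; try exact: msize1X.
  by rewrite addnS.
  by rewrite -msize_poly_eq0 msize_prod //; exact: msizeXi.
by rewrite -msize_poly_eq0 msize_prod //; exact: msize1X.
Qed.


Lemma rho_P v : rho v = P [set i | v i] [set j | ~~ v j].
Proof. by rewrite /rho /P; congr (_ * _); apply: eq_bigl => i; rewrite inE. Qed.

Lemma box_rho v w : box [set i | v i] [set j | ~~ v j] w = (v == w).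
Proof.
apply/andP/eqP => [[/forall_inP H1 /forall_inP H2]|<-].
  apply/ffunP => i; case E: (v i).
    by rewrite (H1 i) // inE E.
  by apply/esym/negbTE/H2; rewrite inE E.
by split; apply/forall_inP => i; rewrite inE.
Qed.

Lemma J_vanish (C : code n) f : in_neural_ideal C f -> forall w, w \in C -> evalw f w = 0.
Proof.
move=> [h ->] w wC; rewrite /evalw rmorph_sum /=; apply: big1 => v vC.
rewrite rmorphM /= -/(evalw (rho v) w) rho_P evalP box_rho.
case: eqP => [E|_]; last by rewrite mulr0.
by rewrite E wC in vC.
Qed.

Lemma J_add (C : code n) f g : in_neural_ideal C f -> in_neural_ideal C g ->
  in_neural_ideal C (f + g).
Proof.
move=> [h1 ->] [h2 ->]; exists (fun v => h1 v + h2 v).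
by rewrite -big_split /=; apply: eq_bigr => v _; rewrite mulrDl.
Qed.

Lemma P_addX s t i : i \notin s -> P (i |: s) t = 'X_i * P s t.
Proof. by move=> H; rewrite /P big_setU1 //= mulrA. Qed.
Lemma P_add1X s t i : i \notin t -> P s (i |: t) = (1 - 'X_i) * P s t.
Proof. by move=> H; rewrite /P big_setU1 //= mulrCA. Qed.

Lemma disU1 s t i : [disjoint s & t] -> i \notin t -> [disjoint i |: s & t].
Proof.
rewrite !disjoint_subset => /subsetP d it; apply/subsetP => j.
rewrite !inE => /orP[/eqP->|js] //; exact: d.
Qed.

Lemma vanish_J (C : code n) s t : [disjoint s & t] ->
  (forall w, w \in C -> ~~ box s t w) -> in_neural_ideal C (P s t).
Proof.
move Ek: #|~: (s :|: t)| => k; elim: k s t Ek => [|k IH] s t Ek dis van.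
  have cov : forall i, (i \in s) || (i \in t).
    move=> i; apply/negPn/negP => H.
    have : i \in ~: (s :|: t) by rewrite !inE.
    by move/cards0_eq: Ek => ->; rewrite inE.
  set v : word n := [ffun i => i \in s].
  have Es : [set i | v i] = s by apply/setP => i; rewrite !inE ffunE.
  have Et : [set j | ~~ v j] = t.
    apply/setP => i; rewrite !inE ffunE; case Hs: (i \in s) => /=.
      by apply/esym/negbTE; move: (disjointFr dis Hs) => ->.
    by move: (cov i); rewrite Hs.
  have vC : v \notin C.
    apply/negP => /van; rewrite -Es -Et box_rho eqxx //.
  exists (fun w => if w == v then 1 else 0).
  rewrite (bigD1 v) //= eqxx mul1r big1 ?addr0; first by rewrite rho_P Es Et.
  by move=> w /andP[_ /negbTE ->]; rewrite mul0r.
have : (0 < #|~: (s :|: t)|)%N by rewrite Ek.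
case/card_gt0P => i; rewrite !inE negb_or => /andP[iS iT].
have E : P s t = P (i |: s) t + P s (i |: t).
  by rewrite (P_addX _ iS) (P_add1X _ iT) -mulrDl addrC subrK mul1r.
have iin : i \in ~: (s :|: t) by rewrite !inE negb_or iS iT.
have K1 : #|~: ((i |: s) :|: t)| = k.
  have -> : ~: ((i |: s) :|: t) = (~: (s :|: t)) :\ i.
    by apply/setP => j; rewrite !inE; case: (j == i).
  by move: Ek; rewrite (cardsD1 i) iin add1n => [[]].
have K2 : #|~: (s :|: (i |: t))| = k.
  have -> : ~: (s :|: (i |: t)) = (~: (s :|: t)) :\ i.
    by apply/setP => j; rewrite !inE; case: (j == i) => /=; rewrite ?orbT ?andbF.
  by move: Ek; rewrite (cardsD1 i) iin add1n => [[]].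
rewrite E; apply: J_add; [apply: IH K1 _ _ | apply: IH K2 _ _].
- exact: disU1.
- move=> w /van; apply: contra => /andP[/forall_inP H1 H2]; apply/andP; split => //.
  by apply/forall_inP => j js; apply: H1; rewrite !inE js orbT.
- by rewrite disjoint_sym disU1 // disjoint_sym.
- move=> w /van; apply: contra => /andP[H1 /forall_inP H2]; apply/andP; split => //.
  by apply/forall_inP => j js; apply: H2; rewrite !inE js orbT.
Qed.


Definition vanish (C : code n) s t := forall w, w \in C -> ~~ box s t w.
Definition mini (C : code n) s t := vanish C s t /\
  forall s' t', s' \subset s -> t' \subset t -> vanish C s' t' -> s' = s /\ t' = t.

Lemma J_vanishP (C : code n) s t : in_neural_ideal C (P s t) -> vanish C s t.
Proof.
move=> /J_vanish H w /H; rewrite evalP; case: (box s t w) => //.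
Qed.

Lemma card_lt2 s' s t' t : s' \subset s -> t' \subset t -> ~ (s' = s /\ t' = t) ->
  (#|s'| + #|t'| < #|s| + #|t|)%N.
Proof.
move=> ss tt ne; have h1 := subset_leq_card ss; have h2 := subset_leq_card tt.
case: (eqVneq s' s) => [Es|ns].
  have : t' != t by apply/eqP => Et; apply: ne.
  move=> nt; have : (#|t'| < #|t|)%N by apply: proper_card; rewrite properEneq nt tt.
  rewrite Es; lia.
have : (#|s'| < #|s|)%N by apply: proper_card; rewrite properEneq ns ss.
lia.
Qed.

Lemma CF_iff (C : code n) f : in_CF C f <->
  exists s t, [/\ [disjoint s & t], f = P s t & mini C s t].
Proof.
split.
  move=> [[s [t [dis E]]] fJ nomin]; change (f = P s t) in E; exists s, t; split => //.
  have van : vanish C s t by apply: J_vanishP; rewrite -E.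
  split => // s' t' ss tt van'.
  apply: NNPP => ne; apply: nomin; exists (P s' t'); split.
  - exists s', t'; split => //; exact: disjointW ss tt dis.
  - apply: vanish_J => //; exact: disjointW ss tt dis.
  - by rewrite E !tdegP; apply: card_lt2.
  - by exists (P (s :\: s') (t :\: t')); rewrite E; apply: P_split.
move=> [s [t [dis E [van min]]]]; split.
- by exists s, t.
- by rewrite E; apply: vanish_J.
move=> [g [[s' [t' [dis' Eg]]] gJ lt dv]]; change (g = P s' t') in Eg.
have van' : vanish C s' t' by apply: J_vanishP; rewrite -Eg.
move: dv; rewrite E Eg => /pdvd_P [] // ss tt.
have [Es Et] := min s' t' ss tt van'.
by move: lt; rewrite E Eg !tdegP Es Et ltnn.
Qed.

Lemma exists_mini (C : code n) s t : vanish C s t ->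
  exists s0 t0, [/\ s0 \subset s, t0 \subset t & mini C s0 t0].
Proof.
move Ek: (#|s| + #|t|)%N => k; elim: k {-2}k (leqnn k) s t Ek => [|k IH] k0 le s t Ek van.
  exists s, t; split => //; split => // s' t' ss tt _.
  apply: NNPP => ne; have := card_lt2 ss tt ne; lia.
case: (classic (mini C s t)) => [m|nm]; first by exists s, t.
have : exists s' t', [/\ s' \subset s, t' \subset t, vanish C s' t' & ~ (s' = s /\ t' = t)].
  apply: NNPP => H; apply: nm; split => // s' t' ss tt v'; apply: NNPP => ne; apply: H.
  by exists s', t'.
move=> [s' [t' [ss tt v' ne]]].
have lt := card_lt2 ss tt ne.
have [|s0 [t0 [s0s t0t m]]] := IH (#|s'| + #|t'|)%N _ s' t' erefl v'; first lia.
exists s0, t0; split => //; [exact: subset_trans s0s ss | exact: subset_trans t0t tt].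
Qed.


Lemma mpoly11 : (1 + 1 : PolyF2 n) = 0.
Proof. by rewrite -mpolyC1 -mpolyCD F2_11 mpolyC0. Qed.

Lemma mpolyN (p : PolyF2 n) : - p = p.
Proof.
apply/eqP; rewrite eq_sym -subr_eq0 opprK.
have -> : p + p = (1 + 1) * p by rewrite mulrDl mul1r.
by rewrite mpoly11 mul0r.
Qed.

Lemma xlin_X (i : 'I_n) b : xlin i b = if b then 1 - 'X_i else 'X_i.
Proof.
rewrite /xlin /bitF; case: b => /=.
  by rewrite mulr1n mpolyC1 -opprB; exact: mpolyN.
by rewrite mpolyC0 subr0.
Qed.

Lemma xlin_sub1 (i : 'I_n) b : xlin i b - 1 = xlin i (~~ b).
Proof.
rewrite !xlin_X; case: b => /=.
  by rewrite addrAC subrr add0r; exact: mpolyN.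
by rewrite -opprB; exact: mpolyN.
Qed.

Definition Sl (b : bool) (i : 'I_n) s := if b then s else i |: s.
Definition Tl (b : bool) (i : 'I_n) t := if b then i |: t else t.

Lemma P_ST i b s t : i \notin s -> i \notin t ->
  P (Sl b i s) (Tl b i t) = P s t * xlin i b.
Proof.
move=> iS iT; rewrite xlin_X /Sl /Tl; case: b.
  by rewrite P_add1X // mulrC.
by rewrite P_addX // mulrC.
Qed.

Lemma P00 : P set0 set0 = 1.
Proof. by rewrite /P !big_set0 mulr1. Qed.

Lemma xlin_P i b : xlin i b = P (Sl b i set0) (Tl b i set0).
Proof. by rewrite P_ST ?inE // P00 mul1r. Qed.

Lemma forall_U1 (A : {set 'I_n}) i (p : 'I_n -> bool) :
  [forall j in i |: A, p j] = p i && [forall j in A, p j].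
Proof.
apply/forall_inP/andP => [H|[pi /forall_inP H] j].
  by split; [apply: H; rewrite !inE eqxx | apply/forall_inP => j jA; apply: H; rewrite !inE jA orbT].
by rewrite !inE => /orP[/eqP->|/H].
Qed.

Lemma box_ST i b s t w :
  box (Sl b i s) (Tl b i t) w = box s t w && (w i == ~~ b).
Proof.
rewrite /box /Sl /Tl; case: b => /=.
  by rewrite forall_U1 eqbF_neg; case: (~~ w i); rewrite ?andbF ?andbT.
by rewrite forall_U1 eqb_id; case: (w i); rewrite ?andbF ?andbT.
Qed.

Lemma dis_ST i b s t : [disjoint s & t] -> i \notin s -> i \notin t ->
  [disjoint Sl b i s & Tl b i t].
Proof.
move=> d iS iT; rewrite /Sl /Tl; case: b; first by rewrite disjoint_sym disU1 // disjoint_sym.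
exact: disU1.
Qed.


Lemma sand_in s s' i : s \subset s' -> s' \subset i |: s -> i \in s' -> s' = i |: s.
Proof.
move=> h1 h2 h3; apply/eqP; rewrite eqEsubset h2 /=; apply/subsetP => j.
by rewrite !inE => /orP[/eqP->|/(subsetP h1)].
Qed.

Lemma sand_out s s' i : s \subset s' -> s' \subset i |: s -> i \notin s' -> s' = s.
Proof.
move=> h1 h2 h3; apply/eqP; rewrite eqEsubset h1 andbT; apply/subsetP => j js.
move: (subsetP h2 j js); rewrite !inE => /orP[/eqP E|//].
by rewrite -E js in h3.
Qed.

Lemma sub_back (c : word n) i s t s2 t2 : box s2 t2 c ->
  s2 \subset Sl (c i) i s -> t2 \subset Tl (c i) i t -> s2 \subset s /\ t2 \subset t.
Proof.
move=> /andP[/forall_inP B1 /forall_inP B2]; rewrite /Sl /Tl.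
case E: (c i) => h1 h2; split => //; apply/subsetP => j jx.
  move: (subsetP h2 j jx); rewrite !inE => /orP[/eqP Ej|//].
  by move: (B2 j jx); rewrite Ej E.
move: (subsetP h1 j jx); rewrite !inE => /orP[/eqP Ej|//].
by move: (B1 j jx); rewrite Ej E.
Qed.

Lemma sandwich (c : word n) i s t s' t' : box s t c -> i \notin s -> i \notin t ->
  s \subset s' -> s' \subset Sl (c i) i s -> t \subset t' -> t' \subset Tl (c i) i t ->
  ~~ box s' t' c -> s' = Sl (c i) i s /\ t' = Tl (c i) i t.
Proof.
move=> bst iS iT h1 h2 h3 h4 nb; rewrite /Sl /Tl in h2 h4 *.
case E: (c i); rewrite E in h2 h4.
  have Es : s' = s by apply/eqP; rewrite eqEsubset h1 h2.
  case: (boolP (i \in t')) => it; first by split => //; apply: sand_in.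
  have Et := sand_out h3 h4 it.
  by rewrite Es Et bst in nb.
have Et : t' = t by apply/eqP; rewrite eqEsubset h3 h4.
case: (boolP (i \in s')) => is'; first by split => //; apply: sand_in.
have Es := sand_out h1 h2 is'.
by rewrite Es Et bst in nb.
Qed.

End S.

Lemma eval0P n (s t : {set 'I_n}) (c : word n) : (evalw (P s t) c = 0) <-> ~~ box s t c.
Proof. by rewrite evalP; case: (box s t c). Qed.

Lemma vanishU n (C' : code n) (c : word n) s t :
  vanish (C' :|: [set c]) s t <-> vanish C' s t /\ ~~ box s t c.
Proof.
split.
  move=> H; split; first by move=> w wC; apply: H; rewrite !inE wC.
  by apply: H; rewrite !inE eqxx orbT.
move=> [H1 H2] w; rewrite !inE => /orP[/H1 //|/eqP->//].
Qed.

Theorem proposition2 (n : nat) (C' : code n) (c : word n) :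
  let M := fun f : PolyF2 n => in_CF C' f /\ evalw f c = 0 in
  let N := fun f : PolyF2 n => in_CF C' f /\ ~ M f in
  let L := fun g : PolyF2 n =>
    exists (f : PolyF2 n) (i : 'I_n),
      [/\ N f, g = f * xlin i (c i),
          ~ pdvd (xlin i (c i) - 1) f &
          ~ exists m : PolyF2 n, M m /\ pdvd m g] in
  forall g : PolyF2 n, in_CF (C' :|: [set c]) g <-> (M g \/ L g).
Proof.
move=> M N L g; split.
- move=> /CF_iff [s [t [dis Eg [van min]]]].
  have [van' nbc] := (vanishU _ _ _ _).1 van.
  have [s0 [t0 [s0s t0t m0]]] := exists_mini van'.
  have dis0 : [disjoint s0 & t0] by exact: disjointW s0s t0t dis.
  case: (boolP (box s0 t0 c)) => b0; last first.
    have [Es Et] := min s0 t0 s0s t0t ((vanishU _ _ _ _).2 (conj m0.1 b0)).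
    left; split; last by rewrite Eg; apply/eval0P.
    by apply/CF_iff; exists s, t; split => //; rewrite -Es -Et.
  have [i Hi] : exists i, if c i then i \in t else i \in s.
    move: nbc; rewrite negb_and => /orP[/forall_inPn [i iS nci]|/forall_inPn [i iT ci]].
      by exists i; rewrite (negbTE nci).
    by exists i; rewrite (negbNE ci).
  move: (b0) => /andP[/forall_inP B1 /forall_inP B2].
  have iS0 : i \notin s0.
    apply/negP => H; move: (B1 i H) (subsetP s0s i H) => ci iS; rewrite ci in Hi.
    by move: (disjointFr dis iS); rewrite Hi.
  have iT0 : i \notin t0.
    apply/negP => H; move: (B2 i H) (subsetP t0t i H) => ci iT; rewrite (negbTE ci) in Hi.
    by move: (disjointFr dis Hi); rewrite iT.
  have s1s : Sl (c i) i s0 \subset s.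
    rewrite /Sl; case: (c i) Hi => // Hi; apply/subsetP => j.
    by rewrite !inE => /orP[/eqP->//|/(subsetP s0s)].
  have t1t : Tl (c i) i t0 \subset t.
    rewrite /Tl; case: (c i) Hi => // Hi; apply/subsetP => j.
    by rewrite !inE => /orP[/eqP->//|/(subsetP t0t)].
  have van1 : vanish (C' :|: [set c]) (Sl (c i) i s0) (Tl (c i) i t0).
    apply/vanishU; split.
      by move=> w /(m0.1) H; rewrite box_ST negb_and H.
    by rewrite box_ST negb_and; case: (c i); rewrite orbT.
  have [Es Et] := min _ _ s1s t1t van1.
  right; exists (P s0 t0), i; split.
  + split; first by apply/CF_iff; exists s0, t0.
    by move=> [_ /eval0P]; rewrite b0.
  + by rewrite Eg -Es -Et P_ST.
  + rewrite xlin_sub1 xlin_P => /pdvd_P [] // h1 h2.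
    move: h1 h2; rewrite /Sl /Tl; case: (c i) => /= h1 h2.
      by move: (subsetP h1 i); rewrite !inE eqxx (negbTE iS0) => /(_ isT).
    by move: (subsetP h2 i); rewrite !inE eqxx (negbTE iT0) => /(_ isT).
  + move=> [m [[/CF_iff [s2 [t2 [dis2 Em m2]]] e2] dv]].
    rewrite Em in e2; move/eval0P: e2 => nb2.
    move: dv; rewrite Em Eg => /pdvd_P [] // s2s t2t.
    have [Es2 Et2] := min _ _ s2s t2t ((vanishU _ _ _ _).2 (conj m2.1 nb2)).
    rewrite Es2 Et2 in m2.
    have [Es0 Et0] := m2.2 _ _ s0s t0t m0.1.
    by rewrite Es0 Et0 in b0; rewrite b0 in nbc.
- move=> [[/CF_iff [s [t [dis Eg m]]] e] | [f [i [[fCF nM] Eg na nb]]]].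
    apply/CF_iff; exists s, t; split => //; split.
      apply/vanishU; split; first exact: m.1.
      by apply/eval0P; rewrite -Eg.
    by move=> s' t' h1 h2 /vanishU [v' _]; apply: m.2.
  have [s [t [dis Ef m]]] := (CF_iff _ _).1 fCF.
  have bc : box s t c.
    by apply/negPn/negP => nb0; apply: nM; split => //; rewrite Ef; apply/eval0P.
  move: (bc) => /andP[/forall_inP B1 /forall_inP B2].
  have iS : i \notin s.
    apply/negP => iS; apply: na; rewrite xlin_sub1 (B1 i iS) /= xlin_P /Sl /Tl /=.
    exists (P (s :\: (i |: set0)) (t :\: set0)); rewrite Ef; apply: P_split; last exact: sub0set.
    by apply/subsetP => j; rewrite !inE orbF => /eqP->.
  have iT : i \notin t.
    apply/negP => iT; apply: na; rewrite xlin_sub1 (negbTE (B2 i iT)) /= xlin_P /Sl /Tl /=.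
    exists (P (s :\: set0) (t :\: (i |: set0))); rewrite Ef; apply: P_split; first exact: sub0set.
    by apply/subsetP => j; rewrite !inE orbF => /eqP->.
  have dis1 := dis_ST (c i) dis iS iT.
  apply/CF_iff; exists (Sl (c i) i s), (Tl (c i) i t); split => //.
    by rewrite Eg Ef P_ST.
  split.
    apply/vanishU; split.
      by move=> w /(m.1) H; rewrite box_ST negb_and H.
    by rewrite box_ST negb_and; case: (c i); rewrite orbT.
  move=> s' t' h2 h4 van'.
  have [v'C' nb'] := (vanishU _ _ _ _).1 van'.
  have [s2 [t2 [s2s t2t m2]]] := exists_mini v'C'.
  have s2S := subset_trans s2s h2; have t2T := subset_trans t2t h4.
  case: (boolP (box s2 t2 c)) => b2; last first.
    exfalso; apply: nb; exists (P s2 t2); split.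
      split; last exact/eval0P.
      apply/CF_iff; exists s2, t2; split => //; exact: disjointW s2S t2T dis1.
    exists (P (Sl (c i) i s :\: s2) (Tl (c i) i t :\: t2)).
    by rewrite Eg Ef -P_ST //; apply: P_split.
  have [s2s' t2t'] := sub_back b2 s2S t2T.
  have [Es2 Et2] := m.2 _ _ s2s' t2t' m2.1.
  rewrite Es2 Et2 in s2s t2t.
  exact: sandwich bc iS iT s2s h2 t2t h4 nb'.
Qed.
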